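(* For every integer $r\ge0$, $$\sum_{i=1}^\infty(a_{i+1}-a_i)\,i^r\le 2\,r!,$$ where $a_i=(1-2^{1-2i})\zeta(2i)$ and $\zeta$ is the Riemann zeta function.
   Context: $\zeta$ denotes the Riemann zeta function. *)

(* Defs.v *)
From Stdlib Require Import Reals Arith.
From Coquelicot Require Import Coquelicot.
Open Scope R_scope.

(* Riemann zeta function on the half-line s > 1, via its Dirichlet series
   zeta s = sum_{n>=1} n^{-s}.  (Only used at s = 2i, i >= 1.) *)
Definition zeta (s : R) : R := Series (fun n : nat => / Rpower (INR (S n)) s).

Definition a (i : nat) : R :=
  (1 - Rpower 2 (1 - 2 * INR i)) * zeta (2 * INR i).

(* Main.v *)
Require Import Defs.
From Stdlib Require Import Reals Arith Lra Lia.
From Coquelicot Require Import Coquelicot.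
Open Scope R_scope.

Definition z (i n : nat) : R := (/ (INR (S n))^2) ^ i.

Lemma INRS_ge1 n : 1 <= INR (S n).
Proof. rewrite S_INR; pose proof (pos_INR n); lra. Qed.

Lemma zeta_z i : zeta (2 * INR i) = Series (z i).
Proof.
  unfold zeta; apply Series_ext; intro n; unfold z.
  pose proof (INRS_ge1 n).
  replace (2 * INR i) with (INR (2 * i)) by (rewrite mult_INR; simpl; lra).
  rewrite Rpower_pow by lra. rewrite pow_mult, pow_inv. reflexivity.
Qed.

Lemma rp2 i : Rpower 2 (1 - 2 * INR i) = 2 * / 4 ^ i.
Proof.
  unfold Rminus. rewrite Rpower_plus, Rpower_Ropp, Rpower_1 by lra.
  replace (2 * INR i) with (INR (2 * i)) by (rewrite mult_INR; simpl; lra).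
  rewrite Rpower_pow by lra. rewrite pow_mult. f_equal. f_equal. f_equal. lra.
Qed.

Lemma a_eq i : a i = (1 - 2 * / 4 ^ i) * Series (z i).
Proof. unfold a. rewrite rp2, zeta_z. reflexivity. Qed.

Lemma z_pos i n : 0 < z i n.
Proof. unfold z. apply pow_lt. apply Rinv_0_lt_compat. pose proof (INRS_ge1 n). nra. Qed.

Lemma z_le i n : (1 <= i)%nat -> z i n <= / INR (S n) ^ 2.
Proof.
  intro Hi. unfold z. pose proof (INRS_ge1 n).
  assert (0 < / INR (S n) ^2 <= 1).
  { split. apply Rinv_0_lt_compat; nra. rewrite <- Rinv_1. apply Rinv_le_contravar; nra. }
  set (X := / INR (S n) ^ 2) in *.
  destruct i as [|j]; [lia|]. rewrite <- tech_pow_Rmult.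
  assert (X ^ j <= 1) by (rewrite <- (pow1 j); apply pow_incr; lra). assert (0 <= X^j) by (apply pow_le; lra). nra.
Qed.
Lemma tele_sum N : sum_f_R0 (fun n => 2 * (/ INR (S n) - / INR (S (S n)))) N = 2 * (1 - / INR (S (S N))).
Proof.
  induction N.
  - simpl. lra.
  - rewrite tech5, IHN. lra.
Qed.

Lemma lim_invSS : is_lim_seq (fun N => / INR (S (S N))) 0.
Proof.
  assert (H := is_lim_seq_inv _ _ is_lim_seq_INR).
  simpl in H. specialize (H ltac:(discriminate)).
  apply (is_lim_seq_incr_n _ 2) in H.
  eapply is_lim_seq_ext; [|exact H]. intro n. simpl. replace (n+2)%nat with (S (S n)) by lia. reflexivity.
Qed.

Lemma tele_series : is_series (fun n => 2 * (/ INR (S n) - / INR (S (S n)))) 2.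
Proof.
  assert (H : is_lim_seq (sum_n (fun n => 2 * (/ INR (S n) - / INR (S (S n))))) 2).
  { apply (is_lim_seq_ext (fun N => 2*(1 - / INR (S (S N))))). intro N. rewrite sum_n_Reals, tele_sum. reflexivity.
    replace (Finite 2) with (Rbar_mult 2 (1 - 0)) by (simpl; f_equal; lra).
    apply (is_lim_seq_scal_l _ 2 (1 - 0)).
    apply is_lim_seq_minus'. apply is_lim_seq_const. apply lim_invSS. }
  exact H.
Qed.

Lemma ex_z i : (1 <= i)%nat -> ex_series (z i).
Proof.
  intro Hi. apply (@ex_series_le R_AbsRing R_CompleteNormedModule (z i) (fun n => 2 * (/ INR (S n) - / INR (S (S n))))).
  - intro n. change (norm (z i n)) with (Rabs (z i n)).
    rewrite Rabs_pos_eq by (left; apply z_pos).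
    eapply Rle_trans. apply z_le; auto.
    pose proof (INRS_ge1 n). rewrite (S_INR (S n)).
    set (m := INR (S n)) in *.
    replace (2 * (/ m - / (m+1))) with (2 / (m * (m+1))) by (field; lra).
    simpl. rewrite Rmult_1_r.
    replace (2 / (m * (m+1))) with (/(m*m) + (m-1)/(m*m*(m+1))) by (field; lra).
    assert (0 <= (m-1)/(m*m*(m+1))).
    { unfold Rdiv. apply Rmult_le_pos. lra. left. apply Rinv_0_lt_compat.
      assert (0 < m*m) by nra. nra. }
    lra.
  - eexists. apply tele_series.
Qed.

Definition P i N := sum_f_R0 (z i) N.
Definition Alt i N := sum_f_R0 (fun k => z i (2*k) - z i (S (2*k))) N.

Lemma z_odd i k : z i (S (2*k)) = / 4 ^ i * z i k.
Proof.
  unfold z.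
  replace (INR (S (S (2*k)))) with (2 * INR (S k)) by
    (rewrite !S_INR, mult_INR; simpl; lra).
  pose proof (INRS_ge1 k).
  replace (/ (2 * INR (S k))^2) with (/4 * / INR (S k)^2) by (field; lra).
  rewrite Rpow_mult_distr, pow_inv. reflexivity.
Qed.

Lemma Alt_eq i N : Alt i N = P i (S (2*N)) - 2 * / 4 ^ i * P i N.
Proof.
  unfold Alt, P. induction N.
  - simpl. pose proof (z_odd i 0) as H. simpl in H. rewrite H. lra.
  - rewrite tech5, IHN.
    replace (S (2 * S N)) with (S (S (S (2*N)))) by lia.
    replace (2 * S N)%nat with (S (S (2*N))) by lia.
    rewrite (tech5 _ (S (S (2*N)))), (tech5 _ (S (2*N))), (tech5 _ N).
    replace (S (S (S (2*N)))) with (S (2 * S N)) by lia.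
    rewrite z_odd.
    replace (S (S (2*N))) with (2 * S N)%nat by lia. lra.
Qed.

Definition g i n := z i n - z (S i) n.

Lemma z_S i n : z (S i) n = / INR (S n) ^ 2 * z i n.
Proof. unfold z. rewrite <- tech_pow_Rmult. reflexivity. Qed.

Lemma X_bounds n : 0 < / INR (S n) ^ 2 <= 1.
Proof.
  pose proof (INRS_ge1 n).
  split. apply Rinv_0_lt_compat; nra. rewrite <- Rinv_1. apply Rinv_le_contravar; nra.
Qed.

Lemma g0 i : g i 0 = 0.
Proof. unfold g. rewrite z_S. simpl (INR 1). replace (/ (1^2)) with 1 by (simpl; field). lra. Qed.

Lemma g_nonneg i n : 0 <= g i n.
Proof.
  unfold g. rewrite z_S. pose proof (X_bounds n). pose proof (z_pos i n). nra.
Qed.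

Lemma g_decr i n : (1 <= i)%nat -> (1 <= n)%nat -> g i (S n) <= g i n.
Proof.
  intros Hi Hn. destruct i as [|j]; [lia|]. unfold g. rewrite !z_S. unfold z.
  pose proof (INRS_ge1 n).
  assert (Hm : 2 <= INR (S n)) by (rewrite S_INR; apply le_INR in Hn; simpl in Hn; lra).
  rewrite (S_INR (S n)).
  set (m := INR (S n)) in *.
  set (X := / m^2). set (Y := / (m+1)^2).
  assert (HX : 0 < X <= /4).
  { unfold X. split. apply Rinv_0_lt_compat; nra. apply Rinv_le_contravar; nra. }
  assert (HY : 0 < Y < X).
  { unfold Y, X. split. apply Rinv_0_lt_compat; nra. apply Rinv_lt_contravar; nra. }
  assert (Hp : Y ^ j <= X ^ j) by (apply pow_incr; lra).
  assert (Hp0 : 0 <= Y ^ j) by (apply pow_le; lra).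
  assert (X*(1-X) >= Y*(1-Y)) by nra.
  assert (E1 : X ^ S j - X * X ^ S j = X^j * (X * (1 - X))) by (simpl; ring).
  assert (E2 : Y ^ S j - Y * Y ^ S j = Y^j * (Y * (1 - Y))) by (simpl; ring).
  assert (0 <= X*(1-X)) by nra.
  simpl in E1, E2. rewrite E1, E2. nra.
Qed.

Lemma alt_bound (h : nat -> R) :
  (forall n, 0 <= h n) -> (forall n, (1 <= n)%nat -> h (S n) <= h n) -> h 0%nat = 0 ->
  forall N, h (S (2*N)) <= sum_f_R0 (fun k => h (S (2*k)) - h (2*k)%nat) N <= h 1%nat.
Proof.
  intros Hp Hd H0 N. induction N.
  - simpl. rewrite H0. lra.
  - rewrite tech5.
    replace (2 * S N)%nat with (S (S (2*N))) by lia.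
    assert (h (S (S (2*N))) <= h (S (2*N))) by (apply Hd; lia).
    assert (h (S (S (S (2*N)))) <= h (S (S (2*N)))) by (apply Hd; lia).
    replace (S (2 * S N)) with (S (S (S (2*N)))) by lia.
    lra.
Qed.

Lemma Alt_diff i N : Alt (S i) N - Alt i N = sum_f_R0 (fun k => g i (S (2*k)) - g i (2*k)%nat) N.
Proof.
  unfold Alt. rewrite <- minus_sum. apply sum_eq. intros k _. unfold g. ring.
Qed.

Lemma P_lim i : (1 <= i)%nat -> is_lim_seq (P i) (Series (z i)).
Proof.
  intro Hi. pose proof (Series_correct _ (ex_z i Hi)) as H.
  apply (is_lim_seq_ext (sum_n (z i))). intro N. rewrite sum_n_Reals. reflexivity.
  exact H.
Qed.

Lemma Alt_lim i : (1 <= i)%nat -> is_lim_seq (Alt i) (a i).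
Proof.
  intro Hi.
  apply (is_lim_seq_ext (fun N => P i (S (2*N)) - 2 * / 4 ^ i * P i N)).
  { intro N. rewrite Alt_eq. reflexivity. }
  rewrite a_eq.
  replace ((1 - 2 * / 4 ^ i) * Series (z i)) with (Series (z i) - 2 * / 4 ^ i * Series (z i)) by ring.
  apply is_lim_seq_minus'.
  - apply (is_lim_seq_subseq (P i) (Series (z i)) (fun N => S (2*N))).
    apply eventually_subseq. intro n. lia. apply P_lim; auto.
  - apply (is_lim_seq_scal_l _ (2 * / 4 ^ i) (Series (z i))). apply P_lim; auto.
Qed.

Lemma g1 i : g i 1 = 3/4 * / 4 ^ i.
Proof.
  unfold g. rewrite z_S. unfold z.
  replace (/ INR 2 ^ 2) with (/4) by (simpl; field).
  rewrite pow_inv. field. apply pow_nonzero. lra.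
Qed.

Lemma d_bound i : (1 <= i)%nat -> 0 <= a (S i) - a i <= 3/4 * / 4 ^ i.
Proof.
  intro Hi.
  assert (HL : is_lim_seq (fun N => Alt (S i) N - Alt i N) (a (S i) - a i)).
  { apply is_lim_seq_minus'; apply Alt_lim; lia. }
  pose proof (alt_bound (g i) (g_nonneg i) (fun n => g_decr i n Hi) (g0 i)) as B.
  split.
  - assert (Hle := is_lim_seq_le (fun _ => 0) (fun N => Alt (S i) N - Alt i N) 0 (a (S i) - a i)).
    simpl in Hle. apply Hle; [|apply is_lim_seq_const|exact HL].
    intro N. rewrite Alt_diff. specialize (B N). pose proof (g_nonneg i (S (2*N))). lra.
  - rewrite <- g1.
    assert (Hle := is_lim_seq_le (fun N => Alt (S i) N - Alt i N) (fun _ => g i 1%nat) (a (S i) - a i) (g i 1%nat)).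
    simpl in Hle. apply Hle; [|exact HL|apply is_lim_seq_const].
    intro N. rewrite Alt_diff. specialize (B N). lra.
Qed.

Lemma exp_mult k x : exp (INR k * x) = exp x ^ k.
Proof.
  induction k.
  - simpl. rewrite Rmult_0_l. apply exp_0.
  - rewrite S_INR. replace ((INR k + 1) * x) with (INR k * x + x) by ring.
    rewrite exp_plus, IHk. simpl. ring.
Qed.

Lemma term_le_sum (f : nat -> R) r : (forall k, 0 <= f k) -> f r <= sum_f_R0 f r.
Proof.
  intro Hf. destruct r.
  - simpl. lra.
  - rewrite tech5. assert (0 <= sum_f_R0 f r) by (apply cond_pos_sum; auto). lra.
Qed.

Lemma pow_le_fact_exp x r : 0 <= x -> x ^ r <= INR (fact r) * exp x.
Proof.
  intro Hx. pose proof (exp_ge_taylor x r Hx) as H.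
  assert (H2 : x ^ r / INR (fact r) <= exp x).
  { eapply Rle_trans; [|exact H]. apply (term_le_sum (fun k => x ^ k / INR (fact k))).
    intro k. unfold Rdiv. apply Rmult_le_pos. apply pow_le; auto.
    left. apply Rinv_0_lt_compat. apply INR_fact_lt_0. }
  pose proof (INR_fact_lt_0 r).
  replace (x ^ r) with (INR (fact r) * (x ^ r / INR (fact r))) by (field; lra).
  apply Rmult_le_compat_l; lra.
Qed.

Lemma e_bound : exp 1 <= 32 / 11.
Proof.
  replace 1 with (INR 16 * (1/16)) by (simpl; lra).
  rewrite exp_mult.
  assert (H1 := exp_ineq1_le (- (1/16))).
  assert (H2 : exp (1/16) * exp (- (1/16)) = 1) by (rewrite <- exp_plus; replace (1/16 + - (1/16)) with 0 by lra; apply exp_0).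
  assert (H3 : 0 < exp (1/16)) by apply exp_pos.
  assert (H4 : exp (1/16) <= 16/15) by nra.
  apply Rle_trans with ((16/15)^16).
  apply pow_incr; lra.
  simpl. lra.
Qed.

Theorem lemma4p4 (r : nat) :
  exists l : R,
    is_series (fun n : nat => (a (S (S n)) - a (S n)) * INR (S n) ^ r) l /\
    l <= 2 * INR (fact r).
Proof.
  set (q := exp 1 / 4).
  assert (He := e_bound). assert (He0 := exp_pos 1).
  assert (Hq : 0 < q <= 8/11) by (unfold q; lra).
  assert (Hf := INR_fact_lt_0 r).
  set (C := 3/4 * INR (fact r) * q).
  set (B := fun n : nat => q ^ n * C).
  set (t := fun n : nat => (a (S (S n)) - a (S n)) * INR (S n) ^ r).
  assert (HB : is_series B (/ (1 - q) * C)).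
  { apply is_series_scal_r. apply is_series_geom. rewrite Rabs_pos_eq; lra. }
  assert (Ht : forall n, 0 <= t n <= B n).
  { intro n. unfold t, B, C.
    destruct (d_bound (S n) ltac:(lia)) as [D1 D2].
    assert (P0 : 0 <= INR (S n) ^ r) by (apply pow_le; apply pos_INR).
    assert (P1 : INR (S n) ^ r <= INR (fact r) * exp 1 ^ (S n)).
    { rewrite <- exp_mult, Rmult_1_r. apply pow_le_fact_exp, pos_INR. }
    split. apply Rmult_le_pos; lra.
    apply Rle_trans with ((3/4 * / 4 ^ (S n)) * (INR (fact r) * exp 1 ^ (S n))).
    apply Rmult_le_compat; lra.
    unfold q. unfold Rdiv. rewrite Rpow_mult_distr, pow_inv.
    replace (exp 1 ^ S n) with (exp 1 * exp 1 ^ n) by reflexivity.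
    replace (4 ^ S n) with (4 * 4 ^ n) by reflexivity.
    assert (0 < 4 ^ n) by (apply pow_lt; lra).
    right. field. lra. }
  assert (Hex : ex_series t).
  { apply (@ex_series_le R_AbsRing R_CompleteNormedModule t B).
    intro n. change (norm (t n)) with (Rabs (t n)). rewrite Rabs_pos_eq; apply Ht.
    eexists; exact HB. }
  exists (Series t). split.
  - apply Series_correct. exact Hex.
  - apply Rle_trans with (Series B).
    apply Series_le. exact Ht. eexists; exact HB.
    rewrite (is_series_unique _ _ HB). unfold C.
    assert (0 < 1 - q) by lra.
    apply Rmult_le_reg_l with (1 - q). lra.
    rewrite <- Rmult_assoc, Rinv_r by lra. nra.
Qed.
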